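(* Let $G$ be a finite group and consider a stem extension $\{e\}\to M(G)\xrightarrow{\iota}\tilde{G}\xrightarrow{\pi}G\to\{e\}$ with $\tilde G$ a Schur cover of $G$. Let $H$ be a proper subgroup of $G$ such that $M(H)\cong M(G)$ and $\iota(M(G))\subseteq[\pi^{-1}(H),\pi^{-1}(H)]$. Then the subgraph of $\Delta_D(G)$ induced by $H$ equals $\Delta_D(H)$.
   Context: $M(G)$ denotes the Schur multiplier of $G$. A stem extension of $G$ is a central extension $\{e\}\to N\xrightarrow{\iota}\hat{G}\xrightarrow{\pi}G\to\{e\}$ with $\iota(N)\subseteq Z(\hat{G})\cap[\hat{G},\hat{G}]$; a Schur cover is a stem extension of maximal order (its kernel is $M(G)$). The deep commuting graph $\Delta_D(G)$ is the simple graph with vertex set $G$ in which two distinct vertices are adjacent if and only if their preimages under the projection from a Schur cover commute in that Schur cover (independent of the choice of Schur cover and preimages). *)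

(* Defs.v *)
From HB Require Import structures.
From mathcomp Require Import all_boot all_fingroup all_solvable.

Set Implicit Arguments.
Unset Strict Implicit.
Unset Printing Implicit Defensive.

Local Open Scope group_scope.

(* A stem extension of G: a finite group Gt (in any finGroupType tT) with a
   morphism pi from Gt onto G whose kernel (= iota(N)) lies in Z(Gt) ∩ [Gt,Gt]. *)
Definition stem_ext (gT tT : finGroupType) (G : {group gT}) (Gt : {group tT})
    (pi : {morphism Gt >-> gT}) : bool :=
  (pi @* Gt == G) && ('ker pi \subset 'Z(Gt) :&: Gt^`(1)).

(* A Schur cover: a stem extension whose kernel has maximal order among all
   stem extensions of G (in all finite group types). Its kernel is M(G). *)
Definition schur_cover (gT tT : finGroupType) (G : {group gT}) (Gt : {group tT})
    (pi : {morphism Gt >-> gT}) : Prop :=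
  stem_ext G pi /\
  forall (rT : finGroupType) (R : {group rT}) (f : {morphism R >-> gT}),
    stem_ext G f -> #|'ker f| <= #|'ker pi|.

(* Adjacency in the deep commuting graph Delta_D(G): x, y distinct vertices of
   G whose preimages commute in a Schur cover (stated for every Schur cover and
   every choice of preimages; the paper notes independence of these choices). *)
Definition deep_adj (gT : finGroupType) (G : {group gT}) (x y : gT) : Prop :=
  [/\ x \in G, y \in G, x != y &
      forall (tT : finGroupType) (Gt : {group tT}) (pi : {morphism Gt >-> gT}),
        schur_cover G pi ->
        forall a b : tT, a \in Gt -> b \in Gt -> pi a = x -> pi b = y ->
          commute a b].

(* Main.v *)
Require Import Defs.
From HB Require Import structures.
From mathcomp Require Import all_boot all_fingroup all_solvable.
From mathcomp Require Import zmodp zify.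
Set Implicit Arguments.
Unset Strict Implicit.
Unset Printing Implicit Defensive.
Local Open Scope group_scope.
Lemma expg_pair (T1 T2 : finGroupType) (x : T1) (y : T2) n :
  (x, y) ^+ n = (x ^+ n, y ^+ n).
Proof. by elim: n => // n IH; rewrite !expgS IH. Qed.

Section Step.
Variables (aT vT : finGroupType) (A : {group aT}) (V : {group vT}).
Variable (alpha : {morphism A >-> vT}).
Hypotheses (abA : abelian A) (abV : abelian V) (sUV : alpha @* A \subset V).
Variable v : vT.
Hypotheses (vV : v \in V) (vU : v \notin alpha @* A).

Let U := (alpha @* A)%G.
Let vN : v \in 'N(U).
Proof.
apply: (subsetP (cents_norm _)) vV; rewrite centsC.
exact: subset_trans sUV abV.
Qed.

Let k := #[coset U v].
Let vkU : v ^+ k \in U.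
Proof. by apply: coset_idr; rewrite ?groupX // morphX // expg_order. Qed.

Let dvd_k j : v ^+ j \in U -> k %| j.
Proof.
by move=> vjU; rewrite order_dvdn -morphX //; apply/eqP; exact: coset_id vjU.
Qed.

Let k_gt0 : 0 < k.
Proof. exact: order_gt0. Qed.

Let a0 := odflt 1 [pick a in A | alpha a == v ^+ k].
Let a0P : a0 \in A /\ alpha a0 = v ^+ k.
Proof.
rewrite /a0; case: pickP => [a /andP[aA /eqP] //|none].
case/morphimP: vkU => a _ aA ea; have := none a; rewrite aA -ea eqxx //.
Qed.

Let m := (k * #[a0])%N.
Let m_gt0 : 0 < m.
Proof. by rewrite muln_gt0 k_gt0 order_gt0. Qed.

Let z : 'I_(m.-1).+1 := Zp1.
Let ord_z : #[z] = m.
Proof. by rewrite /z order_Zp1 prednK. Qed.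

Let dvd_vz : #[v] %| #[z].
Proof.
case: a0P => a0A ea0.
by rewrite ord_z order_dvdn /m expgM -ea0 -morphX // expg_order morph1.
Qed.

Let el := eltm dvd_vz.
Let elE i : el (z ^+ i) = v ^+ i.
Proof. exact: eltmE. Qed.

Let el1 : el 1 = 1.
Proof. exact: (elE 0). Qed.
Let elz : el z = v.
Proof. exact: (elE 1). Qed.

Let Z := <[z]>%G.
Let P1 := setX_group A Z.

Let abP1 : abelian P1.
Proof.
apply/centsP=> [[x1 x2]] /setXP[/= x1A x2Z] [y1 y2] /setXP[/= y1A y2Z].
rewrite /commute; congr (_, _) => /=.
  exact: (centsP abA).
exact: (centsP (cycle_abelian z)).
Qed.

Let g : aT * 'I_(m.-1).+1 := (a0^-1, z ^+ k).
Let gP1 : g \in P1.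
Proof. by case: a0P => a0A _; rewrite inE /= groupV a0A mem_cycle. Qed.

Let N := <[g]>%G.
Let NP1 : N \subset P1.
Proof. by rewrite cycle_subG. Qed.

Let P1N : P1 \subset 'N(N).
Proof. by apply: cents_norm; apply: subset_trans abP1 (centS NP1). Qed.

Definition beta (q : aT * 'I_(m.-1).+1) := alpha q.1 * el q.2.

Let elV w : w \in Z -> el w \in V.
Proof. by case/cycleP=> i ->; rewrite elE groupX. Qed.

Let alV a : a \in A -> alpha a \in V.
Proof. by move=> aA; apply: (subsetP sUV); rewrite mem_morphim. Qed.

Lemma beta_morphM : {in P1 &, {morph beta : x y / x * y}}.
Proof.
move=> [x1 x2] [y1 y2] /setXP[/= x1A x2Z] /setXP[/= y1A y2Z].
rewrite /beta /= morphM // /el (eltmM dvd_vz) // -/el.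
have cm : commute (el x2) (alpha y1) by apply: (centsP abV); rewrite ?elV ?alV.
by rewrite -!mulgA; congr (_ * _); rewrite !mulgA cm.
Qed.

Canonical beta_morphism := @Morphism _ _ P1 beta beta_morphM.

Let NK : 'ker (coset N) \subset 'ker beta.
Proof.
rewrite ker_coset cycle_subG; apply/kerP => //.
case: a0P => a0A ea0.
by rewrite /= /beta /= morphV // ea0 elE mulVg.
Qed.

Definition psi1 := factm NK P1N.

Definition lam1 (a : aT) := coset N (a, 1).

Let pa1 a : a \in A -> (a, 1) \in P1.
Proof. by move=> aA; rewrite inE /= aA group1. Qed.

Lemma lam1_morphM : {in A &, {morph lam1 : x y / x * y}}.
Proof.
move=> x y xA yA; rewrite /lam1 -morphM ?(subsetP P1N) ?pa1 //.
by congr (coset N _); congr (_, _); rewrite mulg1.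
Qed.

Canonical lam1_morphism := @Morphism _ _ A lam1 lam1_morphM.

Let C1 := (coset N @* P1)%G.

Let abC1 : abelian C1.
Proof. exact: morphim_abelian. Qed.

Let slC1 : lam1 @* A \subset C1.
Proof.
apply/subsetP=> _ /morphimP[a _ aA ->]; rewrite /= /lam1 mem_morphim //.
  by rewrite (subsetP P1N) ?pa1.
exact: pa1.
Qed.

Let injl1 : 'injm lam1.
Proof.
apply/subsetP=> a aK; have aA := dom_ker aK; have la := mker aK.
have /cycleP[i ei] : (a, 1) \in N.
  apply: coset_idr; first by rewrite (subsetP P1N) ?pa1.
  exact: la.
move: ei; rewrite expg_pair => [[ea e1]].
have : m %| k * i.
  by rewrite -ord_z order_dvdn expgM -e1.
rewrite /m dvdn_pmul2l // => dv.
case: a0P => a0A _.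
by rewrite inE ea expgVn (eqP (_ : a0 ^+ i == 1)) ?invg1 // -order_dvdn.
Qed.

Let psilam1 : {in A, forall a, psi1 (lam1 a) = alpha a}.
Proof.
move=> a aA; rewrite /lam1 /psi1 factmE ?pa1 //.
by rewrite /= /beta /= el1 mulg1.
Qed.

Let impsi1 : psi1 @* C1 = beta @* P1.
Proof. exact: morphim_factm. Qed.

Let imbeta_V : beta @* P1 \subset V.
Proof.
apply/subsetP=> _ /morphimP[[a w] _ /setXP[/= aA wZ] ->].
by rewrite /= /beta groupM ?alV ?elV.
Qed.

Let imbeta_gt : #|U| < #|beta @* P1|.
Proof.
apply: proper_card; rewrite properEneq; apply/andP; split.
  apply/eqP=> eU; move: vU; rewrite -/U eU => /negP; apply.
  apply/morphimP; exists (1, z); rewrite ?inE ?group1 ?cycle_id //.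
  by rewrite /= /beta /= (morph1 alpha) mul1g elz.
apply/subsetP=> _ /morphimP[a _ aA ->]; apply/morphimP; exists (a, 1); rewrite ?pa1 //.
by rewrite /= /beta /= el1 mulg1.
Qed.

Let kerpsi1 : 'ker psi1 = lam1 @* 'ker alpha.
Proof.
rewrite ker_factm; apply/eqP; rewrite eqEsubset; apply/andP; split; last first.
  apply/subsetP=> _ /morphimP[d _ dK ->]; have dA := dom_ker dK.
  rewrite /= /lam1; apply: mem_morphim; first by rewrite (subsetP P1N) ?pa1.
  apply/kerP; first exact: pa1.
  by rewrite /= /beta /= (mker dK) el1 mulg1.
apply/subsetP=> _ /morphimP[q qN qK ->]; have qP := dom_ker qK.
case: q qN qK qP => a w qN qK /setXP[/= aA /cycleP[j ej]].
have bq := mker qK; rewrite /= /beta /= ej elE in bq.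
have vjU : v ^+ j \in U.
  have -> : v ^+ j = (alpha a)^-1 by apply/eqP; rewrite eq_sym eq_invg_mul bq.
  by rewrite groupV mem_morphim.
have /dvdnP[i ji] := dvd_k vjU.
case: a0P => a0A ea0.
set d := a * a0 ^+ i.
have dA : d \in A by rewrite groupM ?groupX.
have gi : g ^+ i \in N by rewrite mem_cycle.
have eq : (a, w) = (d, 1) * g ^+ i.
  rewrite expg_pair /d /=; congr (_, _).
    by rewrite expgVn mulgK.
  by rewrite mul1g -expgM ej ji mulnC.
have dK : d \in 'ker alpha.
  apply/kerP => //; rewrite morphM ?groupX // morphX // ea0 -expgM.
  by rewrite mulnC -ji.
rewrite eq morphM ?(subsetP P1N) ?pa1 ?(subsetP NP1) //.
change (coset N (d, 1) * coset N (g ^+ i) \in lam1 @* 'ker alpha).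
rewrite (coset_id gi) mulg1.
exact: (mem_morphim lam1_morphism dA dK).
Qed.

Lemma step_ex : exists (bT : finGroupType) (C1 : {group bT})
  (lam1 : {morphism A >-> bT}) (psi1 : {morphism C1 >-> vT}),
  [/\ abelian C1, lam1 @* A \subset C1, 'injm lam1, psi1 @* C1 \subset V
    & #|alpha @* A| < #|psi1 @* C1|] /\
  ('ker psi1 = lam1 @* 'ker alpha /\ {in A, forall a, psi1 (lam1 a) = alpha a}).
Proof.
exists (coset_of N), C1, lam1_morphism, (factm_morphism NK P1N).
split; last by split.
by split=> //; rewrite impsi1.
Qed.

End Step.

Lemma Cexists (aT vT : finGroupType) (A : {group aT}) (V : {group vT})
  (alpha : {morphism A >-> vT}) :
  abelian A -> abelian V -> alpha @* A \subset V ->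
  exists (cT : finGroupType) (C : {group cT}) (lam : {morphism A >-> cT})
         (psi : {morphism C >-> vT}),
  [/\ abelian C, lam @* A \subset C, 'injm lam, psi @* C = V &
      'ker psi = lam @* 'ker alpha /\ {in A, forall a, psi (lam a) = alpha a}].
Proof.
move: {2}(#|V| - #|alpha @* A|) (leqnn (#|V| - #|alpha @* A|)) => n.
elim: n aT A alpha => [|n IH] aT A alpha hn abA abV sUV.
- have eUV : alpha @* A = V.
    apply/eqP; rewrite eqEcard sUV /=; move: hn; rewrite leqn0 subn_eq0 //.
  exists aT, A, (idm_morphism A), alpha; split=> //.
  + by rewrite morphim_idm.
  + exact: injm_idm.
  + by rewrite morphim_idm // (subset_trans (subsetIl _ _)).
- case: (eqVneq (alpha @* A) V) => [eUV|nUV].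
    exists aT, A, (idm_morphism A), alpha; split=> //.
    + by rewrite morphim_idm.
    + exact: injm_idm.
    + by rewrite morphim_idm // (subset_trans (subsetIl _ _)).
  have [v vV vU] : exists2 v, v \in V & v \notin alpha @* A.
    apply/subsetPn/negP => sVU; move/negP: nUV; apply; by rewrite eqEsubset sUV sVU.
  have [bT [C1 [lam1 [psi1 [[abC1 slC1 injl1 sVC1 gt1] [kerpsi1 psilam1]]]]]] :=
    step_ex abA abV sUV vV vU.
  have hn1 : #|V| - #|psi1 @* C1| <= n.
    have := subset_leq_card sVC1; have := subset_leq_card sUV; lia.
  have [cT [C [lam [psi [abC slC injl impsi [kerpsi psilam]]]]]] :=
    IH bT C1 psi1 hn1 abC1 abV sVC1.
  have sA : A \subset lam1 @*^-1 C1.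
    by rewrite -sub_morphim_pre.
  exists cT, C, (restrm_morphism sA [morphism of lam \o lam1]), psi.
  split=> //.
  + rewrite morphim_restrm setIid morphim_comp.
    by apply: subset_trans (morphimS _ slC1) slC.
  + by rewrite injm_restrm // injm_comp.
  + have sK : 'ker alpha \subset A by apply/subsetP=> x /dom_ker.
    split; first by rewrite kerpsi kerpsi1 restrmEsub ?morphim_comp // (subset_trans sK).
    move=> a aA; rewrite /= psilam ?psilam1 //.
    by apply: (subsetP slC1); rewrite mem_morphim.
Qed.

Section LemmaL.
Variables (gT eT : finGroupType) (X : {group gT}) (E : {group eT}).
Variable (p : {morphism E >-> gT}).
Hypotheses (imp : p @* E = X) (kerZ : 'ker p \subset 'Z(E)).

Let A := 'ker p.
Let sAE : A \subset E.
Proof. by apply/subsetP=> a /dom_ker. Qed.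
Let sAN : A \subset 'N(E^`(1)).
Proof. exact: subset_trans sAE (normal_norm (der_normal 1 E)). Qed.

Let alpha := restrm sAN (coset E^`(1)).

Let V := (E / E^`(1))%G.

Let abV : abelian V.
Proof. exact: sub_der1_abelian. Qed.

Let abA : abelian A.
Proof. exact: abelianS kerZ (center_abelian E). Qed.

Let imalpha : alpha @* A \subset V.
Proof. by rewrite morphim_restrm setIid; apply: morphimS. Qed.

Let keralpha : 'ker alpha = A :&: E^`(1).
Proof. by rewrite ker_restrm ker_coset. Qed.


Section Construction.
Variables (cT : finGroupType) (C : {group cT}) (lam : {morphism A >-> cT}).
Variable (psi : {morphism C >-> coset_of E^`(1)}).
Hypotheses (abC : abelian C) (slC : lam @* A \subset C) (injl : 'injm lam).
Hypotheses (impsi : psi @* C = V) (kerpsi : 'ker psi = lam @* 'ker alpha).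
Hypothesis psilam : {in A, forall a, psi (lam a) = alpha a}.

Let EC := setX E C.

Definition phi (q : eT * cT) := coset E^`(1) q.1 * (psi q.2)^-1.

Let cosetV x : x \in E -> coset E^`(1) x \in V.
Proof. by move=> xE; apply: mem_quotient. Qed.

Let psiV c : c \in C -> psi c \in V.
Proof. by move=> cC; rewrite -impsi mem_morphim. Qed.

Lemma phi_morphM : {in EC &, {morph phi : x y / x * y}}.
Proof.
move=> [x1 c1] [x2 c2]; rewrite !inE /= => /andP[x1E c1C] /andP[x2E c2C].
have nE x : x \in E -> x \in 'N(E^`(1)) by move=> ?; rewrite (subsetP (der_norm 1 E)).
rewrite /phi /= (morphM (coset E^`(1))) ?nE // (morphM psi) // invMg.
have cm : commute (psi c1)^-1 (coset E^`(1) x2 * (psi c2)^-1).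
  by apply: (centsP abV); rewrite ?groupM ?groupV ?cosetV ?psiV.
by rewrite -!mulgA; congr (_ * _); rewrite cm mulgA.
Qed.

Canonical phi_morphism := @Morphism _ _ EC phi phi_morphM.

Let S := 'ker phi.

Let SEC : S \subset EC.
Proof. by apply/subsetP=> q /dom_ker. Qed.

Let memS (x : eT) (c : cT) : x \in E -> c \in C -> coset E^`(1) x = psi c -> (x, c) \in S.
Proof.
move=> xE cC e; apply/kerP; first by rewrite inE xE cC.
by rewrite /= /phi /= e mulgV.
Qed.

Let memSP q : q \in S -> [/\ q.1 \in E, q.2 \in C & coset E^`(1) q.1 = psi q.2].
Proof.
move=> qS; have := subsetP SEC q qS; rewrite inE => /andP[q1E q2C].
split=> //; apply/eqP; rewrite eq_mulgV1; apply/eqP; exact: (mker qS).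
Qed.

Definition lamp (a : eT) : eT * cT := (a, lam a).

Lemma lamp_morphM : {in A &, {morph lamp : x y / x * y}}.
Proof. by move=> x y xA yA; rewrite /lamp morphM. Qed.

Canonical lamp_morphism := @Morphism _ _ A lamp lamp_morphM.

Let Gam := (lamp @* A)%G.

Let memA a : a \in A -> a \in E /\ lam a \in C.
Proof.
move=> aA; split; first exact: (subsetP sAE).
by apply: (subsetP slC); rewrite mem_morphim.
Qed.

Let GamS : Gam \subset S.
Proof.
apply/subsetP=> _ /morphimP[a _ aA ->]; have [aE laC] := memA aA.
by apply: memS => //; rewrite psilam.
Qed.

Let SE q : q \in S -> q.1 \in E.
Proof. by case/memSP. Qed.

Definition f0 (q : eT * cT) := p q.1.

Lemma f0_morphM : {in S &, {morph f0 : x y / x * y}}.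
Proof. by move=> x y xS yS; rewrite /f0 /= morphM ?SE. Qed.

Canonical f0_morphism := @Morphism _ _ S f0 f0_morphM.

Let kerf0P q : q \in 'ker f0 -> [/\ q \in S, q.1 \in A, q.2 \in C & coset E^`(1) q.1 = psi q.2].
Proof.
move=> qK; have qS := dom_ker qK; have [q1E q2C e] := memSP qS.
by split=> //; apply/kerP => //; apply: (mker qK).
Qed.

Let cent_kerf0 : 'ker f0 \subset 'C(S).
Proof.
apply/subsetP=> q /kerf0P[_ q1A q2C _]; apply/centP=> r /memSP[r1E r2C _].
have q1Z : q.1 \in 'Z(E) by apply: (subsetP kerZ).
move/centerP: q1Z => [_ /(_ r.1 r1E) c1].
have c2 : commute q.2 r.2 by apply: (centsP abC).
by case: q r c1 c2 {q1A q2C r1E r2C} => [q1 q2] [r1 r2] /= c1 c2; rewrite /commute; congr (_, _).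
Qed.

Let GamK : Gam \subset 'ker f0.
Proof.
apply/subsetP=> _ /morphimP[a _ aA ->]; apply/kerP; first by apply: (subsetP GamS); rewrite mem_morphim.
by rewrite /= /f0 /= (mker aA).
Qed.

Let SN : S \subset 'N(Gam).
Proof.
apply: cents_norm; rewrite centsC; apply: subset_trans GamK cent_kerf0.
Qed.

Let kq : 'ker (coset Gam) \subset 'ker f0.
Proof. by rewrite ker_coset. Qed.

Definition ff := factm kq SN.

Let liftS x : x \in E -> exists2 c, c \in C & (x, c) \in S.
Proof.
move=> xE; have : coset E^`(1) x \in psi @* C by rewrite impsi cosetV.
by case/morphimP=> c _ cC e; exists c => //; apply: memS.
Qed.

Let fstS : [morphism of @fst eT cT] @* S = E.
Proof.
apply/eqP; rewrite eqEsubset; apply/andP; split.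
  by apply/subsetP=> _ /morphimP[q _ qS ->]; apply: SE.
apply/subsetP=> x xE; have [c cC xcS] := liftS xE.
by apply/morphimP; exists (x, c); rewrite ?in_setT.
Qed.

Let derS y : y \in E^`(1) -> (y, 1) \in S^`(1).
Proof.
move=> yD; have : y \in [morphism of @fst eT cT] @* S^`(1).
  by rewrite morphim_der ?subsetT // fstS.
case/morphimP=> q _ qS' /= ->.
have q2 : q.2 = 1.
  have : q.2 \in [morphism of @snd eT cT] @* S^`(1) by rewrite mem_morphim ?inE.
  rewrite morphim_der ?subsetT // => /(subsetP (dergS 1 (_ : _ \subset C))).
  have -> : ([morphism of @snd eT cT] @* S \subset C).
    by apply/subsetP=> _ /morphimP[r _ /memSP[_ r2C _] ->].
  move=> /(_ isT); rewrite /= derg1 (commG1P abC) => /set1P.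
  done.
by case: q q2 qS' => q1 q2 /= ->.
Qed.

Lemma ff_im : ff @* (coset Gam @* S) = X.
Proof.
rewrite morphim_factm; apply/eqP; rewrite eqEsubset; apply/andP; split.
  by apply/subsetP=> _ /morphimP[q _ qS ->]; rewrite -imp /= /f0 mem_morphim ?SE.
rewrite -imp; apply/subsetP=> _ /morphimP[x _ xE ->].
have [c cC xcS] := liftS xE.
by apply/morphimP; exists (x, c).
Qed.

Let decomp q : q \in 'ker f0 -> exists2 d, d \in A :&: E^`(1) &
   q = lamp q.1 * (1, lam d) /\ q.1 \in A.
Proof.
case/kerf0P=> qS q1A q2C e.
set c' := (lam q.1)^-1 * q.2.
have [q1E lq1C] := memA q1A.
have c'K : c' \in 'ker psi.
  apply/kerP; first by rewrite groupM ?groupV.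
  rewrite morphM ?groupV // morphV // psilam // -e /= mulVg.
  done.
move: c'K; rewrite kerpsi keralpha => /morphimP[d _ dK ed].
exists d => //; split=> //.
rewrite /lamp -ed /c'; case: q {qS q2C e c' ed} q1A q1E lq1C => q1 q2 /= *.
by congr (_, _); rewrite ?mulg1 ?mulKVg.
Qed.

Let Y := (coset Gam @* S)%G.

Lemma ff_ker_Z : 'ker ff \subset 'Z(Y).
Proof.
rewrite ker_factm.
have kZ : 'ker f0 \subset 'Z(S).
  by rewrite subsetI cent_kerf0 andbT; apply/subsetP=> q /dom_ker.
apply: subset_trans (morphimS _ kZ) _.
exact: morphim_center.
Qed.

Let SNe q : q \in S -> q \in 'N(Gam).
Proof. by move=> qS; apply: (subsetP SN). Qed.

Lemma ff_ker_der : 'ker ff \subset Y^`(1).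
Proof.
rewrite ker_factm /= -morphim_der //; apply/subsetP=> _ /morphimP[q _ qK ->].
have [d /setIP[dA dD] [eq q1A]] := decomp qK.
have [dE ldC] := memA dA.
have dS' : (d^-1, 1) \in S^`(1) by apply: derS; rewrite groupV.
have dS : (d^-1, 1) \in S by apply: (subsetP (der_sub 1 S)).
have lq1 : lamp q.1 \in Gam by rewrite mem_morphim.
have ld : lamp d \in Gam by rewrite mem_morphim.
have e2 : q = lamp q.1 * ((d^-1, 1) * lamp d).
  rewrite {1}eq; congr (_ * _); rewrite /lamp.
  by congr (_, _); rewrite /= ?mulVg ?mul1g.
have Sg : lamp q.1 \in S by apply: (subsetP GamS).
have Sd : lamp d \in S by apply: (subsetP GamS).
rewrite [X in X \in _](_ : _ = coset Gam (d^-1, 1)); last first.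
  rewrite e2 (morphM (coset Gam)) ?SNe ?groupM //.
  rewrite (morphM (coset Gam)) ?SNe //.
  change (coset Gam (lamp q.1) * (coset Gam (d^-1, 1) * coset Gam (lamp d)) = coset Gam (d^-1, 1)).
  by rewrite (coset_id lq1) (coset_id ld) mul1g mulg1.
by apply: mem_morphim => //; apply: SNe.
Qed.

Let B := setX_group [1 eT]%G ('ker psi)%G.

Let kerf0_eq : 'ker f0 = Gam * B.
Proof.
apply/eqP; rewrite eqEsubset; apply/andP; split.
  apply/subsetP=> q qK; have [d dK [eq q1A]] := decomp qK.
  rewrite eq; apply: mem_mulg; first by rewrite mem_morphim.
  rewrite inE /= group1 kerpsi keralpha mem_morphim //.
  by case/setIP: dK.
rewrite mul_subG //; apply/subsetP=> [[x c]]; rewrite inE /= => /andP[/set1P -> cK].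
have cC := dom_ker cK.
apply/kerP; first by apply: memS; rewrite ?group1 // (mker cK) morph1.
by rewrite /= /f0 /= morph1.
Qed.

Lemma ff_card : #|'ker ff| = #|A :&: E^`(1)|.
Proof.
rewrite ker_factm card_quotient; last first.
  by apply: subset_trans SN; apply/subsetP=> q /dom_ker.
have TI : Gam :&: B = 1.
  apply/trivgP/subsetP=> _ /setIP[/morphimP[a _ aA ->]].
  rewrite inE /= /lamp /= => /andP[/set1P a1 _].
  by rewrite a1 morph1; apply/set1P.
have cK : #|'ker f0| = (#|Gam| * #|B|)%N by rewrite kerf0_eq TI_cardMg.
have := Lagrange GamK; rewrite cK => /eqP; rewrite eqn_mul2l.
have -> : (#|Gam| == 0) = false by apply/negbTE; rewrite -lt0n cardG_gt0.
move/eqP => ->; rewrite cardsX cards1 mul1n.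
rewrite /= kerpsi card_injm ?keralpha //.
exact: subsetIl.
Qed.

Lemma constr_stem : exists (rT : finGroupType) (Y : {group rT}) (f : {morphism Y >-> gT}),
    stem_ext X f /\ #|'ker f| = #|A :&: E^`(1)|.
Proof.
exists (coset_of Gam), Y, (factm_morphism kq SN); split; last exact: ff_card.
apply/andP; split; first by apply/eqP; exact: ff_im.
by rewrite subsetI ff_ker_Z ff_ker_der.
Qed.

End Construction.

Lemma lemmaL_body :
  exists (rT : finGroupType) (Y : {group rT}) (f : {morphism Y >-> gT}),
    stem_ext X f /\ #|'ker f| = #|'ker p :&: E^`(1)|.
Proof.
have [cT [C [lam [psi [abC slC injl impsi [kerpsi psilam]]]]]] :=
  Cexists abA abV imalpha.
exact: (constr_stem abC slC injl impsi kerpsi psilam).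
Qed.
End LemmaL.

Lemma lemmaL (gT eT : finGroupType) (X : {group gT}) (E : {group eT})
  (p : {morphism E >-> gT}) : p @* E = X -> 'ker p \subset 'Z(E) ->
  exists (rT : finGroupType) (Y : {group rT}) (f : {morphism Y >-> gT}),
    stem_ext X f /\ #|'ker f| = #|'ker p :&: E^`(1)|.
Proof. move=> imp kerZ; exact: (lemmaL_body imp kerZ). Qed.

Section Key.
Variables (gT t1 t2 : finGroupType) (X : {group gT}).
Variables (E1 : {group t1}) (p1 : {morphism E1 >-> gT}).
Variables (E2 : {group t2}) (p2 : {morphism E2 >-> gT}).

Definition pullb := [set q in setX E1 E2 | p1 q.1 == p2 q.2].

Lemma pullbP q : reflect [/\ q.1 \in E1, q.2 \in E2 & p1 q.1 = p2 q.2] (q \in pullb).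
Proof.
rewrite !inE; apply: (iffP idP).
  by case/andP=> /andP[? ?] /eqP.
by case=> -> -> ->; rewrite eqxx.
Qed.

Lemma group_pullb : group_set pullb.
Proof.
apply/group_setP; split.
  by apply/pullbP; rewrite /= !group1 !morph1.
move=> [x1 x2] [y1 y2] /pullbP[/= x1E x2E ex] /pullbP[/= y1E y2E ey].
by apply/pullbP; rewrite /= !groupM //= !morphM // ex ey.
Qed.

Canonical pullb_group := Group group_pullb.

Definition pP (q : t1 * t2) := p1 q.1.

Lemma pP_morphM : {in pullb &, {morph pP : x y / x * y}}.
Proof.
by move=> x y /pullbP[x1 _ _] /pullbP[y1 _ _]; rewrite /pP /= morphM.
Qed.

Canonical pP_morphism := @Morphism _ _ pullb pP pP_morphM.

Lemma key_lemma :
  schur_cover X p1 -> p2 @* E2 = X -> 'ker p2 \subset 'Z(E2) ->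
  forall a1 b1 a2 b2, a1 \in E1 -> b1 \in E1 -> a2 \in E2 -> b2 \in E2 ->
  p1 a1 = p2 a2 -> p1 b1 = p2 b2 -> commute a1 b1 -> commute a2 b2.
Proof.
move=> [/andP[/eqP im1 ker1] max1] im2 ker2 a1 b1 a2 b2 a1E b1E a2E b2E ea eb cab.
have lift2 e : e \in E1 -> exists2 e2, e2 \in E2 & p1 e = p2 e2.
  move=> eE; have : p1 e \in p2 @* E2 by rewrite im2 -im1 mem_morphim.
  by case/morphimP=> e2 _ e2E ->; exists e2.
have imP : pP @* pullb = X.
  apply/eqP; rewrite eqEsubset; apply/andP; split.
    apply/subsetP=> _ /morphimP[q _ /pullbP[q1 _ _] ->].
    by rewrite -im1; apply: mem_morphim.
  apply/subsetP=> x; rewrite -{1}im1 => /morphimP[e _ eE ->].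
  have [e2 e2E ee] := lift2 e eE.
  by apply/morphimP; exists (e, e2) => //; apply/pullbP.
have kerPZ : 'ker pP \subset 'Z(pullb).
  apply/subsetP=> q qK; have qP := dom_ker qK.
  have q1K : q.1 \in 'ker p1.
    by case/pullbP: qP => q1E _ _; apply/kerP => //; apply: (mker qK).
  have q2K : q.2 \in 'ker p2.
    case/pullbP: qP => _ q2E e; apply/kerP => //; rewrite -e; apply: (mker qK).
  have /subsetP/(_ _ q1K) : 'ker p1 \subset 'Z(E1).
    by apply: subset_trans ker1 (subsetIl _ _).
  move/(subsetP ker2): q2K => q2Z q1Z.
  rewrite inE qP /=; apply/centP => r /pullbP[r1E r2E _].
  case: q r q1Z q2Z {qK qP q1K} r1E r2E => [q1 q2] [r1 r2] /= q1Z q2Z r1E r2E.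
  move/centerP: q1Z => [_ /(_ r1 r1E) c1]; move/centerP: q2Z => [_ /(_ r2 r2E) c2].
  by rewrite /commute; congr (_, _); [exact: c1 | exact: c2].
have [rT [Y [f [stf cardf]]]] := lemmaL imP kerPZ.
have le1 := max1 rT Y f stf; rewrite cardf in le1.
set D := 'ker pP :&: pullb^`(1) in le1.
have fstP : [morphism of @fst t1 t2] @* pullb = E1.
  apply/eqP; rewrite eqEsubset; apply/andP; split.
    by apply/subsetP=> _ /morphimP[q _ /pullbP[q1 _ _] ->].
  apply/subsetP=> e eE; have [e2 e2E ee] := lift2 e eE.
  by apply/morphimP; exists (e, e2); rewrite ?inE //= eE e2E ee eqxx.
have kerD : 'ker p1 \subset [set q.1 | q in D].
  apply/subsetP=> a aK.
  have : a \in E1^`(1) by apply: (subsetP (subset_trans ker1 (subsetIr _ _))).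
  rewrite -fstP -morphim_der ?subsetT //.
  case/morphimP=> q _ qD eqa; rewrite eqa; apply: imset_f.
  rewrite inE qD andbT; apply/kerP; first by apply: (subsetP (der_sub 1 _)).
  by rewrite /= /pP -eqa (mker aK).
have injD : {in D &, injective (@fst t1 t2)}.
  apply/imset_injP; rewrite eqn_leq leq_imset_card /=.
  by rewrite (leq_trans le1) // subset_leq_card.
have cP : (a1, a2) \in pullb /\ (b1, b2) \in pullb by split; apply/pullbP.
case: cP => aP bP.
have cD : [~ (a1, a2), (b1, b2)] \in D.
  rewrite inE mem_commg ?andbT //; apply/kerP; first by rewrite groupR.
  change (p1 [~ a1, b1] = 1); by move/commgP/eqP: (cab) => ->; rewrite morph1.
have := injD _ _ cD (group1 _).
have -> : [~ (a1, a2), (b1, b2)].1 = [~ a1, b1] by [].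
move/commgP: cab => /eqP -> /(_ erefl) /(congr1 snd) /= /eqP.
by move/commgP.
Qed.
End Key.

Lemma stem_central (gT tT : finGroupType) (G : {group gT}) (Gt : {group tT})
  (pi : {morphism Gt >-> gT}) : schur_cover G pi ->
  pi @* Gt = G /\ 'ker pi \subset 'Z(Gt).
Proof.
case=> /andP[/eqP -> /subset_trans sub] _; split=> //; apply: sub; exact: subsetIl.
Qed.

Theorem proposition3p2 (gT tT : finGroupType) (G H : {group gT})
    (Gt : {group tT}) (pi : {morphism Gt >-> gT}) :
  schur_cover G pi ->
  H \proper G ->
  (exists (hT : finGroupType) (Ht : {group hT}) (sigma : {morphism Ht >-> gT}),
      schur_cover H sigma /\ 'ker sigma \isog 'ker pi) ->
  'ker pi \subset (pi @*^-1 H)^`(1) ->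
  forall x y : gT, x \in H -> y \in H ->
    (deep_adj G x y <-> deep_adj H x y).
Proof.
move=> scG prHG [hT [Ht [sigma [scH isoK]]]] kerD x y xH yH.
have sHG := proper_sub prHG.
have [imG kerZ] := stem_central scG.
set K := (pi @*^-1 H)%G.
have sKG : K \subset Gt by exact: subsetIl.
set piK := restrm sKG pi.
have kerK : 'ker piK = 'ker pi.
  by rewrite ker_restrm; apply/setIidPr; apply: ker_sub_pre.
have imK : piK @* K = H by rewrite morphim_restrm setIid morphpreK // imG.
have scK : schur_cover H piK.
  split.
    apply/andP; split; first by rewrite imK.
    rewrite kerK subsetI kerD andbT.
    rewrite subsetI ker_sub_pre /=.
    apply: subset_trans (subset_trans kerZ (subsetIr _ _)) _.
    exact: centS.
  move=> rT R f stf; rewrite kerK -(card_isog isoK).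
  by case: scH => _ /(_ rT R f stf).
have liftK z : z \in H -> exists2 a, a \in K & piK a = z.
  by move=> zH; move: zH; rewrite -imK => /morphimP[a _ aK ->]; exists a.
split.
- case=> xG yG nxy cG; split=> // hT' Ht' s scs a b aH bH sa sb.
  have [ims kers] := stem_central scs.
  have [a1 a1K pa1] := liftK x xH; have [b1 b1K pb1] := liftK y yH.
  apply: (key_lemma scK ims kers a1K b1K aH bH); rewrite ?pa1 ?pb1 ?sa ?sb //.
  apply: (cG _ _ _ scG a1 b1); rewrite ?(subsetP sKG) //.
- case=> _ _ nxy cH; split=> //; rewrite ?(subsetP sHG) //.
  move=> hT' E s scs a b aE bE sa sb.
  have [ims kers] := stem_central scs.
  have [a1 a1K pa1] := liftK x xH; have [b1 b1K pb1] := liftK y yH.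
  apply: (key_lemma scG ims kers (subsetP sKG _ a1K) (subsetP sKG _ b1K) aE bE).
  + by rewrite sa -pa1.
  + by rewrite sb -pb1.
  exact: (cH _ _ _ scK).
Qed.
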